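(* Let $J\subseteq\mathbb{R}$ be an interval, $f:J\to\mathbb{R}$ convex, $a,b\in J$, and $\nu\in[0,1]$. Put $r=\min\{\nu,1-\nu\}$, $R=\max\{\nu,1-\nu\}$ and $$\Phi_f(\nu):=\int_0^1\left(\frac{f\big(a\nabla_{\nu\lambda}b\big)+f\big(b\nabla_{(1-\nu)\lambda}a\big)}{2}-f\Big(a\nabla_{\frac{1+\lambda(2\nu-1)}{2}}b\Big)\right)d\lambda .$$ Then $$2r\,\Phi_f(\nu)\le \mathfrak C_{f,\nu}(a,b)-f\big(a\nabla_\nu b\big)\le 2R\,\Phi_f(\nu).$$
   Context: For real $x,y$ and $\mu\in[0,1]$, $x\nabla_\mu y:=(1-\mu)x+\mu y$. For $f$ convex on an interval containing $a,b$ and $\nu\in[0,1]$, $$\mathfrak C_{f,\nu}(a,b):=(1-\nu)\int_0^1 f\big(a\nabla_{\nu\lambda}b\big)\,d\lambda+\nu\int_0^1 f\big(b\nabla_{(1-\nu)\lambda}a\big)\,d\lambda .$$ *)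

(* Defs.v *)
From Stdlib Require Import Reals.
From Coquelicot Require Import Coquelicot.
Open Scope R_scope.

Definition nabla (x y mu : R) : R := (1 - mu) * x + mu * y.

Definition is_interval (J : R -> Prop) : Prop :=
  forall x y z, J x -> J z -> x <= y <= z -> J y.

Definition convex_on (J : R -> Prop) (f : R -> R) : Prop :=
  forall x y t, J x -> J y -> 0 <= t <= 1 ->
    f ((1 - t) * x + t * y) <= (1 - t) * f x + t * f y.

Definition frakC (f : R -> R) (nu a b : R) : R :=
  (1 - nu) * RInt (fun l => f (nabla a b (nu * l))) 0 1
  + nu * RInt (fun l => f (nabla b a ((1 - nu) * l))) 0 1.

Definition Phi (f : R -> R) (nu a b : R) : R :=
  RInt (fun l => (f (nabla a b (nu * l)) + f (nabla b a ((1 - nu) * l))) / 2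
                 - f (nabla a b ((1 + l * (2 * nu - 1)) / 2))) 0 1.

(* Main.v *)
Require Import Defs.
From Stdlib Require Import Reals Lra Psatz Classical.
From Coquelicot Require Import Coquelicot.
Open Scope R_scope.

Definition conv_on (h : R -> R) (lo hi : R) : Prop :=
  forall x y t, lo <= x <= hi -> lo <= y <= hi -> 0 <= t <= 1 ->
    h ((1 - t) * x + t * y) <= (1 - t) * h x + t * h y.

Lemma side_bound h lo hi z w t : conv_on h lo hi ->
  lo <= z + w <= hi -> lo <= z - w <= hi -> lo <= z <= hi -> 0 <= t <= 1 ->
  Rabs (h (z + t * w) - h z) <= t * (Rabs (h (z + w) - h z) + Rabs (h z - h (z - w))).
Proof.
  intros Hc Hp Hq Hz Ht.
  assert (Hx : lo <= z + t * w <= hi) by nra.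
  pose proof (Hc z (z + w) t Hz Hp Ht) as H1.
  replace ((1 - t) * z + t * (z + w)) with (z + t * w) in H1 by ring.
  assert (Hs : 0 <= t / (1 + t) <= 1).
  { split. apply Rdiv_le_0_compat; lra.
    apply Rmult_le_reg_r with (1 + t); [lra|].
    unfold Rdiv; rewrite Rmult_assoc, Rinv_l; lra. }
  pose proof (Hc (z + t * w) (z - w) (t / (1 + t)) Hx Hq Hs) as H2.
  replace ((1 - t / (1 + t)) * (z + t * w) + t / (1 + t) * (z - w)) with z in H2
    by (field; lra).
  assert (H3 : (1 + t) * h z <= h (z + t * w) + t * h (z - w)).
  { replace (h (z + t * w) + t * h (z - w)) with
      ((1 + t) * ((1 - t / (1 + t)) * h (z + t * w) + t / (1 + t) * h (z - w)))
      by (field; lra).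
    apply Rmult_le_compat_l; lra. }
  pose proof (Rle_abs (h (z + w) - h z)).
  pose proof (Rle_abs (- (h z - h (z - w)))). rewrite Rabs_Ropp in H0.
  pose proof (Rabs_pos (h (z + w) - h z)).
  pose proof (Rabs_pos (h z - h (z - w))).
  assert (E1 : t * (h (z + w) - h z) <= t * Rabs (h (z + w) - h z)) by (apply Rmult_le_compat_l; lra).
  assert (E2 : t * (- (h z - h (z - w))) <= t * Rabs (h z - h (z - w))) by (apply Rmult_le_compat_l; lra).
  assert (E3 : 0 <= t * Rabs (h z - h (z - w))) by (apply Rmult_le_pos; lra).
  assert (E4 : 0 <= t * Rabs (h (z + w) - h z)) by (apply Rmult_le_pos; lra).
  apply Rabs_le; split; nra.
Qed.

Lemma interior_cont h lo hi z : conv_on h lo hi -> lo < z < hi ->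
  forall eps, 0 < eps -> exists d, 0 < d /\
    forall x, Rabs (x - z) < d -> Rabs (h x - h z) < eps.
Proof.
  intros Hc Hz eps Heps.
  set (e := Rmin (z - lo) (hi - z)).
  assert (He : 0 < e) by (unfold e; apply Rmin_glb_lt; lra).
  assert (He1 : e <= z - lo) by apply Rmin_l.
  assert (He2 : e <= hi - z) by apply Rmin_r.
  set (K := Rabs (h (z + e) - h z) + Rabs (h z - h (z - e))).
  assert (HK : 0 <= K) by (unfold K; pose proof (Rabs_pos (h (z + e) - h z));
    pose proof (Rabs_pos (h z - h (z - e))); lra).
  exists (Rmin e (e * eps / (K + 1))). split.
  { apply Rmin_glb_lt; auto. apply Rdiv_lt_0_compat; nra. }
  intros x Hx.
  assert (Hx1 : Rabs (x - z) < e) by (eapply Rlt_le_trans; [exact Hx| apply Rmin_l]).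
  assert (Hx2 : Rabs (x - z) < e * eps / (K + 1)) by (eapply Rlt_le_trans; [exact Hx| apply Rmin_r]).
  set (t := Rabs (x - z) / e).
  assert (Ht : 0 <= t <= 1).
  { unfold t; split. apply Rdiv_le_0_compat; [apply Rabs_pos|lra].
    apply Rmult_le_reg_r with e; [lra|]. unfold Rdiv; rewrite Rmult_assoc, Rinv_l; lra. }
  assert (HtK : t * K < eps).
  { assert (t < eps / (K + 1)).
    { unfold t. apply Rmult_lt_reg_r with e; [lra|].
      unfold Rdiv; rewrite Rmult_assoc, Rinv_l by lra.
      replace (eps * / (K + 1) * e) with (e * eps / (K + 1)) by (field; lra). lra. }
    assert (t * (K + 1) < eps).
    { apply Rmult_lt_reg_r with (/ (K + 1)).
      apply Rinv_0_lt_compat; lra.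
      rewrite Rmult_assoc, Rinv_r by lra. lra. }
    nra. }
  destruct (Rle_dec z x) as [Hzx|Hzx].
  - assert (Ex : x = z + t * e).
    { unfold t; rewrite Rabs_right by lra. field; lra. }
    pose proof (side_bound h lo hi z e t Hc ltac:(lra) ltac:(lra) ltac:(lra) Ht) as B.
    rewrite <- Ex in B. fold K in B. lra.
  - assert (Ex : x = z + t * (- e)).
    { unfold t; rewrite Rabs_left by lra. field; lra. }
    pose proof (side_bound h lo hi z (- e) t Hc ltac:(lra) ltac:(lra) ltac:(lra) Ht) as B.
    rewrite <- Ex in B.
    replace (z - - e) with (z + e) in B by ring.
    replace (z + - e) with (z - e) in B by ring.
    rewrite (Rabs_minus_sym (h (z - e))), (Rabs_minus_sym (h z) (h (z + e))) in B.
    rewrite (Rplus_comm (Rabs (h z - h (z - e)))) in B.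
    fold K in B. lra.
Qed.

Lemma right_lim h lo hi : conv_on h lo hi -> lo < hi ->
  exists L, forall eps, 0 < eps -> exists d, 0 < d /\
    forall x, lo < x < lo + d -> Rabs (h x - L) < eps.
Proof.
  intros Hc Hlh.
  set (c := (lo + hi) / 2).
  set (g := fun x => (h x - h c) / (c - x)).
  assert (mono : forall x y, lo <= x -> x < y -> y < c -> g y <= g x).
  { intros x y H1 H2 H3. unfold g.
    set (t := (y - x) / (c - x)).
    assert (Ht : 0 <= t <= 1).
    { unfold t; split. apply Rdiv_le_0_compat; lra.
      apply Rmult_le_reg_r with (c - x); [lra|].
      unfold Rdiv; rewrite Rmult_assoc, Rinv_l; lra. }
    pose proof (Hc x c t ltac:(unfold c in *; lra) ltac:(unfold c in *; lra) Ht) as Hv.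
    replace ((1 - t) * x + t * c) with y in Hv by (unfold t; field; lra).
    assert (Hy : h y - h c <= (c - y) / (c - x) * (h x - h c)).
    { replace ((c - y) / (c - x)) with (1 - t) by (unfold t; field; lra). nra. }
    apply Rmult_le_reg_r with (c - y); [lra|].
    unfold Rdiv at 1. rewrite Rmult_assoc, Rinv_l by lra.
    replace ((h x - h c) * / (c - x) * (c - y)) with ((c - y) / (c - x) * (h x - h c))
      by (field; lra). lra. }
  set (E := fun v => exists x, lo < x < c /\ v = g x).
  assert (HB : bound E).
  { exists (g lo). intros v [x [Hx ->]]. apply mono; lra. }
  assert (HN : exists v, E v).
  { exists (g ((lo + c) / 2)). exists ((lo + c) / 2). split; [unfold c; lra| reflexivity]. }
  destruct (completeness E HB HN) as [s [Hs1 Hs2]].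
  exists (h c + (c - lo) * s).
  intros eps Heps.
  set (eps' := eps / (2 * (c - lo))).
  assert (Heps' : 0 < eps') by (unfold eps', c; apply Rdiv_lt_0_compat; lra).
  assert (Hx0 : exists x0, lo < x0 < c /\ s - eps' < g x0).
  { apply NNPP; intro Hn.
    assert (Hub : is_upper_bound E (s - eps')).
    { intros v [x [Hx ->]].
      destruct (Rle_dec (g x) (s - eps')) as [?|Hgt]; auto.
      exfalso; apply Hn; exists x; split; auto; lra. }
    specialize (Hs2 _ Hub). lra. }
  destruct Hx0 as [x0 [Hx0 Hgx0]].
  assert (Hsa : 0 < 2 * (Rabs s + 1)) by (pose proof (Rabs_pos s); lra).
  exists (Rmin (x0 - lo) (eps / (2 * (Rabs s + 1)))). split.
  { apply Rmin_glb_lt; [lra|]. apply Rdiv_lt_0_compat; lra. }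
  intros x [Hx1 Hx2].
  assert (Hd1 : x < x0) by (pose proof (Rmin_l (x0 - lo) (eps / (2 * (Rabs s + 1)))); lra).
  assert (Hd2 : x - lo < eps / (2 * (Rabs s + 1)))
    by (pose proof (Rmin_r (x0 - lo) (eps / (2 * (Rabs s + 1)))); lra).
  assert (Hg1 : g x0 <= g x) by (apply mono; lra).
  assert (Hg2 : g x <= s) by (apply Hs1; exists x; split; [lra|reflexivity]).
  assert (Hhx : h x = h c + (c - x) * g x) by (unfold g; field; unfold c in *; lra).
  rewrite Hhx.
  replace (h c + (c - x) * g x - (h c + (c - lo) * s)) with
    ((c - x) * (g x - s) - (x - lo) * s) by ring.
  assert (A1 : Rabs ((c - x) * (g x - s)) < eps / 2).
  { rewrite Rabs_mult, Rabs_right by (unfold c in *; lra).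
    rewrite Rabs_left1 by lra.
    assert ((c - x) * eps' < eps / 2).
    { unfold eps'. apply Rlt_le_trans with ((c - lo) * (eps / (2 * (c - lo)))).
      apply Rmult_lt_compat_r; [exact Heps'|lra].
      right; field; unfold c; lra. }
    assert ((c - x) * (- (g x - s)) <= (c - x) * eps') by
      (apply Rmult_le_compat_l; [unfold c in *; lra| lra]).
    lra. }
  assert (A2 : Rabs ((x - lo) * s) < eps / 2).
  { rewrite Rabs_mult, Rabs_right by lra.
    assert ((x - lo) * Rabs s <= (x - lo) * (Rabs s + 1)) by (apply Rmult_le_compat_l; lra).
    assert ((x - lo) * (Rabs s + 1) < eps / 2).
    { apply Rlt_le_trans with (eps / (2 * (Rabs s + 1)) * (Rabs s + 1)).
      apply Rmult_lt_compat_r; [pose proof (Rabs_pos s); lra| exact Hd2].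
      right; field; pose proof (Rabs_pos s); lra. }
    lra. }
  pose proof (Rabs_triang ((c - x) * (g x - s)) (- ((x - lo) * s))) as T.
  rewrite Rabs_Ropp in T. unfold Rminus at 1. lra.
Qed.

Lemma left_lim h lo hi : conv_on h lo hi -> lo < hi ->
  exists L, forall eps, 0 < eps -> exists d, 0 < d /\
    forall x, hi - d < x < hi -> Rabs (h x - L) < eps.
Proof.
  intros Hc Hlh.
  assert (Hc' : conv_on (fun x => h (- x)) (- hi) (- lo)).
  { intros x y t Hx Hy Ht. simpl.
    replace (- ((1 - t) * x + t * y)) with ((1 - t) * (- x) + t * (- y)) by ring.
    apply Hc; lra. }
  destruct (right_lim _ _ _ Hc' ltac:(lra)) as [L HL].
  exists L. intros eps Heps. destruct (HL eps Heps) as [d [Hd Hx]].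
  exists d; split; auto. intros x Hxx.
  specialize (Hx (- x) ltac:(lra)). simpl in Hx. rewrite Ropp_involutive in Hx. exact Hx.
Qed.

Lemma cont_of_eps g z :
  (forall eps, 0 < eps -> exists d, 0 < d /\
     forall x, Rabs (x - z) < d -> Rabs (g x - g z) < eps) -> continuous g z.
Proof.
  intros H. apply continuity_pt_filterlim.
  intros eps Heps. destruct (H eps Heps) as [d [Hd Hx]].
  exists d; split; auto. intros x [_ Hxd]. apply Hx. exact Hxd.
Qed.

Lemma conv_ex_RInt h lo hi : conv_on h lo hi -> lo < hi -> ex_RInt h lo hi.
Proof.
  intros Hc Hlh.
  destruct (right_lim h lo hi Hc Hlh) as [L0 HL0].
  destruct (left_lim h lo hi Hc Hlh) as [L1 HL1].
  set (ge := fun x => if Rle_dec x lo then L0 else if Rle_dec hi x then L1 else h x).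
  apply ex_RInt_ext with ge.
  { intros x Hx. rewrite Rmin_left in Hx by lra. rewrite Rmax_right in Hx by lra.
    unfold ge. destruct (Rle_dec x lo); [lra|]. destruct (Rle_dec hi x); [lra|]. reflexivity. }
  apply (@ex_RInt_continuous R_CompleteNormedModule).
  intros z Hz. rewrite Rmin_left in Hz by lra. rewrite Rmax_right in Hz by lra.
  apply cont_of_eps. intros eps Heps.
  destruct (Req_dec z lo) as [Ez|Nz].
  - subst z. destruct (HL0 eps Heps) as [d [Hd Hx]].
    exists (Rmin d (hi - lo)). split. apply Rmin_glb_lt; lra.
    intros x Hxd.
    pose proof (Rmin_l d (hi - lo)). pose proof (Rmin_r d (hi - lo)).
    apply Rabs_def2 in Hxd.
    unfold ge. destruct (Rle_dec lo lo); [|lra].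
    destruct (Rle_dec x lo).
    + rewrite Rminus_eq_0, Rabs_R0; lra.
    + destruct (Rle_dec hi x); [lra|]. apply Hx; lra.
  - destruct (Req_dec z hi) as [Ez'|Nz'].
    + subst z. destruct (HL1 eps Heps) as [d [Hd Hx]].
      exists (Rmin d (hi - lo)). split. apply Rmin_glb_lt; lra.
      intros x Hxd.
      pose proof (Rmin_l d (hi - lo)). pose proof (Rmin_r d (hi - lo)).
      apply Rabs_def2 in Hxd.
      unfold ge. destruct (Rle_dec hi lo); [lra|]. destruct (Rle_dec hi hi); [|lra].
      destruct (Rle_dec x lo); [lra|].
      destruct (Rle_dec hi x).
      * rewrite Rminus_eq_0, Rabs_R0; lra.
      * apply Hx; lra.
    + destruct (interior_cont h lo hi z Hc ltac:(lra) eps Heps) as [d [Hd Hx]].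
      exists (Rmin d (Rmin (z - lo) (hi - z))). split.
      { apply Rmin_glb_lt; [lra|]. apply Rmin_glb_lt; lra. }
      intros x Hxd.
      pose proof (Rmin_l d (Rmin (z - lo) (hi - z))). pose proof (Rmin_r d (Rmin (z - lo) (hi - z))).
      pose proof (Rmin_l (z - lo) (hi - z)). pose proof (Rmin_r (z - lo) (hi - z)).
      assert (Hxd' : Rabs (x - z) < d) by lra.
      apply Rabs_def2 in Hxd.
      unfold ge. destruct (Rle_dec z lo); [lra|]. destruct (Rle_dec hi z); [lra|].
      destruct (Rle_dec x lo); [lra|]. destruct (Rle_dec hi x); [lra|].
      apply Hx; exact Hxd'.
Qed.

Lemma inJ J a b s : is_interval J -> J a -> J b -> 0 <= s <= 1 -> J (nabla a b s).
Proof.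
  intros HI Ha Hb Hs. unfold nabla.
  destruct (Rle_dec a b).
  - apply (HI a _ b); auto; nra.
  - apply (HI b _ a); auto; nra.
Qed.

Lemma F_conv J f a b : is_interval J -> convex_on J f -> J a -> J b ->
  conv_on (fun s => f (nabla a b s)) 0 1.
Proof.
  intros HI Hc Ha Hb x y t Hx Hy Ht.
  replace (nabla a b ((1 - t) * x + t * y)) with
    ((1 - t) * nabla a b x + t * nabla a b y) by (unfold nabla; ring).
  apply Hc; auto; apply (inJ J); auto.
Qed.

Lemma aff_conv F al be : conv_on F 0 1 ->
  (forall l, 0 <= l <= 1 -> 0 <= al + be * l <= 1) ->
  conv_on (fun l => F (al + be * l)) 0 1.
Proof.
  intros HF Hr x y t Hx Hy Ht.
  replace (al + be * ((1 - t) * x + t * y)) with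
    ((1 - t) * (al + be * x) + t * (al + be * y)) by ring.
  apply HF; auto.
Qed.

Lemma pw_half F nu x y : conv_on F 0 1 -> 0 <= nu <= 1/2 -> 0 <= x <= 1 -> 0 <= y <= 1 ->
  2 * nu * ((F x + F y) / 2 - F ((x + y) / 2)) <= (1 - nu) * F x + nu * F y - F ((1 - nu) * x + nu * y) /\
  (1 - nu) * F x + nu * F y - F ((1 - nu) * x + nu * y) <= 2 * (1 - nu) * ((F x + F y) / 2 - F ((x + y) / 2)).
Proof.
  intros HF Hnu Hx Hy.
  assert (Hm : 0 <= (x + y) / 2 <= 1) by lra.
  assert (Hp : 0 <= (1 - nu) * x + nu * y <= 1) by nra.
  split.
  - pose proof (HF x ((x + y) / 2) (2 * nu) Hx Hm ltac:(lra)) as H.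
    replace ((1 - 2 * nu) * x + 2 * nu * ((x + y) / 2)) with ((1 - nu) * x + nu * y) in H by field.
    lra.
  - set (t := (1 - 2 * nu) / (2 * (1 - nu))).
    assert (Ht : 0 <= t <= 1).
    { unfold t; split. apply Rdiv_le_0_compat; lra.
      apply Rmult_le_reg_r with (2 * (1 - nu)); [lra|].
      unfold Rdiv; rewrite Rmult_assoc, Rinv_l; lra. }
    pose proof (HF ((1 - nu) * x + nu * y) y t Hp Hy Ht) as H.
    replace ((1 - t) * ((1 - nu) * x + nu * y) + t * y) with ((x + y) / 2) in H
      by (unfold t; field; lra).
    assert (H2 : 2 * (1 - nu) * F ((x + y) / 2) <=
      F ((1 - nu) * x + nu * y) + (1 - 2 * nu) * F y).
    { replace (F ((1 - nu) * x + nu * y) + (1 - 2 * nu) * F y) with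
        (2 * (1 - nu) * ((1 - t) * F ((1 - nu) * x + nu * y) + t * F y))
        by (unfold t; field; lra).
      apply Rmult_le_compat_l; lra. }
    lra.
Qed.

Lemma pw F nu x y : conv_on F 0 1 -> 0 <= nu <= 1 -> 0 <= x <= 1 -> 0 <= y <= 1 ->
  2 * Rmin nu (1 - nu) * ((F x + F y) / 2 - F ((x + y) / 2)) <= (1 - nu) * F x + nu * F y - F ((1 - nu) * x + nu * y) /\
  (1 - nu) * F x + nu * F y - F ((1 - nu) * x + nu * y) <= 2 * Rmax nu (1 - nu) * ((F x + F y) / 2 - F ((x + y) / 2)).
Proof.
  intros HF Hnu Hx Hy.
  destruct (Rle_dec nu (1/2)).
  - rewrite Rmin_left, Rmax_right by lra. apply pw_half; auto; lra.
  - rewrite Rmin_right, Rmax_left by lra.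
    destruct (pw_half F (1 - nu) y x HF ltac:(lra) Hy Hx) as [H1 H2].
    replace ((1 - (1 - nu)) * y + (1 - nu) * x) with ((1 - nu) * x + nu * y) in H1, H2 by ring.
    replace ((y + x) / 2) with ((x + y) / 2) in H1, H2 by field.
    replace (1 - (1 - nu)) with nu in H1, H2 by ring.
    split; lra.
Qed.

Lemma is_RInt_lin3 (P Q M : R -> R) IP IQ IM c1 c2 c3 c0 :
  is_RInt P 0 1 IP -> is_RInt Q 0 1 IQ -> is_RInt M 0 1 IM ->
  is_RInt (fun l => c1 * P l + c2 * Q l + c3 * M l + c0) 0 1 (c1 * IP + c2 * IQ + c3 * IM + c0).
Proof.
  intros iP iQ iM.
  pose proof (is_RInt_plus _ _ _ _ _ _
    (is_RInt_plus _ _ _ _ _ _ (is_RInt_plus _ _ _ _ _ _ (is_RInt_scal _ _ _ c1 _ iP)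
      (is_RInt_scal _ _ _ c2 _ iQ)) (is_RInt_scal _ _ _ c3 _ iM)) (is_RInt_const 0 1 c0)) as iG.
  unfold minus, plus, opp, scal in iG; simpl in iG. unfold mult in iG; simpl in iG.
  replace (c1 * IP + c2 * IQ + c3 * IM + c0) with (c1 * IP + c2 * IQ + c3 * IM + (1 - 0) * c0) by ring.
  exact iG.
Qed.

Theorem theorem2p11 (J : R -> Prop) (f : R -> R) (a b nu : R) :
  is_interval J -> convex_on J f -> J a -> J b -> 0 <= nu <= 1 ->
  2 * Rmin nu (1 - nu) * Phi f nu a b <= frakC f nu a b - f (nabla a b nu) /\
  frakC f nu a b - f (nabla a b nu) <= 2 * Rmax nu (1 - nu) * Phi f nu a b.
Proof.
  intros HI Hc Ha Hb Hnu.
  pose proof (F_conv J f a b HI Hc Ha Hb) as HF.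
  set (F := fun s => f (nabla a b s)) in HF.
  set (P := fun l => f (nabla a b (nu * l))).
  set (Q := fun l => f (nabla b a ((1 - nu) * l))).
  set (M := fun l => f (nabla a b ((1 + l * (2 * nu - 1)) / 2))).
  set (N := f (nabla a b nu)).
  assert (exP : ex_RInt P 0 1).
  { apply ex_RInt_ext with (fun l => F (0 + nu * l)).
    { intros x _. unfold F, P. rewrite Rplus_0_l. reflexivity. }
    apply conv_ex_RInt; [|lra]. apply aff_conv; auto. intros; nra. }
  assert (exQ : ex_RInt Q 0 1).
  { apply ex_RInt_ext with (fun l => F (1 + (- (1 - nu)) * l)).
    { intros x _. unfold F, Q. f_equal. unfold nabla; ring. }
    apply conv_ex_RInt; [|lra]. apply aff_conv; auto. intros; nra. }
  assert (exM : ex_RInt M 0 1).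
  { apply ex_RInt_ext with (fun l => F (1/2 + ((2 * nu - 1) / 2) * l)).
    { intros x _. unfold F, M. f_equal. unfold nabla. field. }
    apply conv_ex_RInt; [|lra]. apply aff_conv; auto. intros; nra. }
  pose proof (RInt_correct _ _ _ exP) as iP.
  pose proof (RInt_correct _ _ _ exQ) as iQ.
  pose proof (RInt_correct _ _ _ exM) as iM.
  set (IP := RInt P 0 1) in *. set (IQ := RInt Q 0 1) in *. set (IM := RInt M 0 1) in *.
  assert (EC : frakC f nu a b = (1 - nu) * IP + nu * IQ) by reflexivity.
  assert (EPhi : Phi f nu a b = (IP + IQ) / 2 - IM).
  { unfold Phi. apply is_RInt_unique.
    replace ((IP + IQ) / 2 - IM) with (1/2*IP + 1/2*IQ + -1*IM + 0) by field.
    eapply is_RInt_ext; [| apply (is_RInt_lin3 P Q M IP IQ IM (1/2) (1/2) (-1) 0 iP iQ iM)].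
    intros x _. simpl. unfold P, Q, M. field. }
  rewrite EC, EPhi.
  assert (Hpt : forall l, 0 <= l <= 1 ->
    2 * Rmin nu (1 - nu) * ((P l + Q l) / 2 - M l) <= (1 - nu) * P l + nu * Q l - N /\
    (1 - nu) * P l + nu * Q l - N <= 2 * Rmax nu (1 - nu) * ((P l + Q l) / 2 - M l)).
  { intros l Hl.
    destruct (pw F nu (nu * l) (1 - (1 - nu) * l) HF Hnu ltac:(nra) ltac:(nra)) as [H1 H2].
    assert (E1 : F (nu * l) = P l) by reflexivity.
    assert (E2 : F (1 - (1 - nu) * l) = Q l) by (unfold F, Q; f_equal; unfold nabla; ring).
    assert (E3 : F ((nu * l + (1 - (1 - nu) * l)) / 2) = M l) by (unfold F, M; f_equal; unfold nabla; field).
    assert (E4 : F ((1 - nu) * (nu * l) + nu * (1 - (1 - nu) * l)) = N)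
      by (unfold F, N; f_equal; unfold nabla; ring).
    rewrite E1, E2, E3, E4 in H1, H2. split; lra. }
  set (r := Rmin nu (1 - nu)). set (R0 := Rmax nu (1 - nu)).
  fold r R0 in Hpt.
  pose proof (is_RInt_lin3 P Q M IP IQ IM (1 - nu) nu 0 (- N) iP iQ iM) as iG.
  pose proof (is_RInt_lin3 P Q M IP IQ IM r r (- (2 * r)) 0 iP iQ iM) as iL.
  pose proof (is_RInt_lin3 P Q M IP IQ IM R0 R0 (- (2 * R0)) 0 iP iQ iM) as iU.
  assert (EG := is_RInt_unique _ _ _ _ iG).
  assert (EL := is_RInt_unique _ _ _ _ iL).
  assert (EU := is_RInt_unique _ _ _ _ iU).
  split.
  - assert (Hle := RInt_le _ _ 0 1 (Rlt_le 0 1 Rlt_0_1) (ex_intro _ _ iL) (ex_intro _ _ iG)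
      ltac:(intros l Hl; simpl; destruct (Hpt l ltac:(lra)) as [H1 _]; lra)).
    rewrite EL, EG in Hle. simpl in Hle. lra.
  - assert (Hle := RInt_le _ _ 0 1 (Rlt_le 0 1 Rlt_0_1) (ex_intro _ _ iG) (ex_intro _ _ iU)
      ltac:(intros l Hl; simpl; destruct (Hpt l ltac:(lra)) as [_ H2]; lra)).
    rewrite EU, EG in Hle. simpl in Hle. lra.
Qed.
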